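(* Let $M:\mathbb{T}\to(0,\infty)$ be a positive scalar function on the unit circle $\mathbb{T}$, let $m\in\mathbb{N}$, and fix $\varepsilon\ge0$. For real coefficients $(p_0,\dots,p_m)$ and $(q_0,\dots,q_m)$ let $P(z)=\sum_{k=-m}^{m}p_kz^{-k}$ and $Q(z)=\sum_{k=-m}^{m}q_kz^{-k}$ with $p_{-k}=p_k$, $q_{-k}=q_k$. Then the set of coefficient vectors $(p_0,\dots,p_m,q_0,\dots,q_m)\in\mathbb{R}^{2m+2}$ satisfying (i) $P(z)>0$ and $Q(z)>0$ for all $z\in\mathbb{T}$, (ii) $q_0=1$, and (iii) $\max_{z\in\mathbb{T}}\big|P(z)/Q(z)-M(z)\big|\le\varepsilon$, is convex. *)

(* Defs.v *)
From HB Require Import structures.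
From mathcomp Require Import all_boot all_order all_algebra.
From mathcomp Require Import complex.
From mathcomp Require Import reals.
Set Implicit Arguments. Unset Strict Implicit. Unset Printing Implicit Defensive.
Import Order.TTheory GRing.Theory Num.Theory.
Local Open Scope ring_scope.

(* Laurent polynomial P(z) = \sum_{k=-m}^{m} p_{|k|} z^{-k}, where the
   coefficient vector p = (p_0, ..., p_m) is real and p_{-k} := p_k. *)
Definition symLaurent (R : realType) (m : nat) (p : 'rV[R]_m.+1) (z : R[i]) : R[i] :=
  \sum_(i < (m.*2).+1)
    (p ord0 (inord `|(i%:Z - m%:Z)%R|%N))%:C%C * z ^ (- (i%:Z - m%:Z)%R).

Definition admissible (R : realType) (m : nat) (M : R[i] -> R) (eps : R)
    (p q : 'rV[R]_m.+1) : Prop :=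
  (forall z : R[i], `|z| = 1 -> 0 < symLaurent p z /\ 0 < symLaurent q z)
  /\ q ord0 ord0 = 1
  /\ (forall z : R[i], `|z| = 1 ->
        `| symLaurent p z / symLaurent q z - (M z)%:C%C | <= eps%:C%C).

(* Main.v *)
Require Import Defs.
From HB Require Import structures.
From mathcomp Require Import all_boot all_order all_algebra.
From mathcomp Require Import complex reals.
From mathcomp Require Import ring.
Import Order.TTheory GRing.Theory Num.Theory.
Local Open Scope ring_scope.

Lemma conv_bound (C : numFieldType) (P1 Q1 P2 Q2 m e a b : C) :
  0 < Q1 -> 0 < Q2 -> 0 <= a -> 0 <= b -> 0 < a * Q1 + b * Q2 ->
  `|P1 / Q1 - m| <= e -> `|P2 / Q2 - m| <= e ->
  `|(a * P1 + b * P2) / (a * Q1 + b * Q2) - m| <= e.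
Proof.
move=> hQ1 hQ2 ha hb hQ h1 h2.
have nQ1 : Q1 != 0 by rewrite gt_eqF.
have nQ2 : Q2 != 0 by rewrite gt_eqF.
have nQ : a * Q1 + b * Q2 != 0 by rewrite gt_eqF.
have E : (a * P1 + b * P2) / (a * Q1 + b * Q2) - m =
   (a * ((P1 / Q1 - m) * Q1) + b * ((P2 / Q2 - m) * Q2)) / (a * Q1 + b * Q2).
  apply: (mulIf nQ); rewrite mulrBl !divfK // !mulrBl !divfK //; ring.
rewrite E normrM normfV (ger0_norm (ltW hQ)) ler_pdivrMr //.
apply: le_trans (ler_normD _ _) _.
rewrite !normrM (ger0_norm ha) (ger0_norm hb) (ger0_norm (ltW hQ1)) (ger0_norm (ltW hQ2)).
rewrite mulrDr lerD //.
  rewrite mulrCA; apply: ler_pM; [exact: normr_ge0 | exact: mulr_ge0 ha (ltW hQ1) | exact: h1 | exact: lexx].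
rewrite mulrCA; apply: ler_pM; [exact: normr_ge0 | exact: mulr_ge0 hb (ltW hQ2) | exact: h2 | exact: lexx].
Qed.

Lemma symLaurent_lin (R : realType) (m : nat) (a b : R) (p q : 'rV[R]_m.+1) z :
  symLaurent (a *: p + b *: q) z = a%:C%C * symLaurent p z + b%:C%C * symLaurent q z.
Proof.
rewrite /symLaurent !mulr_sumr -big_split /=; apply: eq_bigr => i _.
by rewrite !mxE rmorphD !rmorphM /= !mulrA mulrDl.
Qed.

Theorem lemma4p5 (R : realType) (M : R[i] -> R)
  (hM : forall z : R[i], `|z| = 1 -> 0 < M z)
  (m : nat) (eps : R) (heps : 0 <= eps) :
  forall (p1 q1 p2 q2 : 'rV[R]_m.+1) (t : R),
    admissible M eps p1 q1 -> admissible M eps p2 q2 ->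
    0 <= t <= 1 ->
    admissible M eps (t *: p1 + (1 - t) *: p2) (t *: q1 + (1 - t) *: q2).
Proof.
move=> p1 q1 p2 q2 t [pos1 [q10 b1]] [pos2 [q20 b2]] /andP[t0 t1].
have ta : 0 <= t%:C%C :> R[i] by rewrite lecR.
have tb : 0 <= (1 - t)%:C%C :> R[i] by rewrite lecR subr_ge0.
have comb : forall x y : R[i], 0 < x -> 0 < y -> 0 < t%:C%C * x + (1 - t)%:C%C * y.
  move=> x y hx hy.
  have [->|tn0] := eqVneq t 0.
    by rewrite mul0r add0r subr0 mul1r.
  have tp : 0 < t%:C%C :> R[i] by rewrite ltcR lt_def tn0 t0.
  by rewrite ltr_pwDl // ?mulr_gt0 // mulr_ge0 // ltW.
split; [|split].
- move=> z hz; rewrite !symLaurent_lin.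
  have [a1 a2] := pos1 z hz; have [c1 c2] := pos2 z hz.
  by split; apply: comb.
- by rewrite !mxE q10 q20 mulr1 mulr1 addrC subrK.
- move=> z hz; rewrite !symLaurent_lin.
  have [a1 a2] := pos1 z hz; have [c1 c2] := pos2 z hz.
  by apply: conv_bound => //; [apply: comb | apply: b1 | apply: b2].
Qed.
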